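(* Let $\Phi$ be an irreducible crystallographic root system with simple system $S$ and positive system $\Phi^+$, let $k$ be a positive integer, let $\mathcal{I}=(I_1,\ldots,I_k)$ be a geometric chain of $k$ ideals in the root poset, and let $\underline{\mathcal{I}}=(\underline{I}_1,\ldots,\underline{I}_{k+1})$ with $\underline{I}_i=I_i$ for $i\le k$ and $\underline{I}_{k+1}=\bigcup_{i+j=k+1}((I_i+I_j)\cap\Phi^+)\cup I_k\cup S$. If $\alpha$ is a rank $r$ indecomposable element of $\mathcal{I}$, then $\alpha$ is a rank $r$ indecomposable element of $\underline{\mathcal{I}}$.
   Context: Root poset: $\Phi^+$ with $\alpha\le\beta$ iff $\beta-\alpha$ is a nonnegative integer combination of $S$; ideals are down-closed subsets. Sumsets: $A+B=\{a+b\mid a\in A,b\in B\}$. An ascending chain $I_1\subseteq\cdots\subseteq I_K$ of ideals, with $J_i=\Phi^+\setminus I_i$, is geometric if $(I_i+I_j)\cap\Phi^+\subseteq I_{i+j}$ for $i,j\in\{0,\ldots,K\}$, $i+j\le K$, and $(J_i+J_j)\cap\Phi^+\subseteq J_{i+j}$ for $i,j\in\{0,\ldots,K\}$, where $I_0=\varnothing$, $J_0=\Phi^+$, $J_i=J_K$ for $i>K$. (In $\underline{I}_{k+1}$, $i,j\in\{0,\ldots,k\}$.) For a chain $\mathcal{I}=(I_1,\ldots,I_K)$, $r_\alpha(\mathcal{I})=\min\{r_1+\cdots+r_m\mid\alpha=\alpha_1+\cdots+\alpha_m,\alpha_i\in I_{r_i},r_i\in\{1,\ldots,K\}\}$, $\infty$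 if none. An element $\alpha\in\Phi^+$ is a rank $r$ indecomposable element of $\mathcal{I}$ (a chain of $K$ ideals, $r\in\{1,\ldots,K\}$) if $\alpha\in I_r$ and (i) $r_\alpha(\mathcal{I})=r$; (ii) $\alpha\notin I_i+I_j$ whenever $i+j=r$ (with $I_0=\varnothing$); (iii) whenever $\beta\in\Phi^+$ and $r_{\alpha+\beta}(\mathcal{I})=t\le K$, then $\beta\in I_{t-r}$. Here $K=k$ for $\mathcal{I}$ and $K=k+1$ for $\underline{\mathcal{I}}$. *)

(* Defs.v *)
From mathcomp Require Import all_boot all_order all_algebra.
Set Implicit Arguments. Unset Strict Implicit. Unset Printing Implicit Defensive.
Import Order.TTheory GRing.Theory Num.Theory.
Local Open Scope ring_scope.

Section RootSystems.
Variables (R : realFieldType) (n : nat).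
Local Notation V := 'rV[R]_n.

Definition dotv (u v : V) : R := (u *m v^T) 0 0.

Definition cartan (b a : V) : R := 2 * dotv b a / dotv a a.
Definition reflect_root (a b : V) : V := b - cartan b a *: a.

Definition root_system (Phi : seq V) : Prop :=
  [/\ uniq Phi && ((0 : V) \notin Phi),
      (forall v : V, exists c : ('I_(size Phi) -> R),
          v = \sum_(i < size Phi) c i *: Phi`_i),
      (forall a b, a \in Phi -> b \in Phi -> reflect_root a b \in Phi),
      (forall a b, a \in Phi -> b \in Phi -> exists z : int, cartan b a = z%:~R) &
      (forall a (c : R), a \in Phi -> c *: a \in Phi -> c = 1 \/ c = -1)].

Definition irreducible_rs (Phi : seq V) : Prop :=
  forall P : V -> bool,
    (exists2 a, a \in Phi & P a) -> (exists2 a, a \in Phi & ~~ P a) ->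
    exists a b, [/\ a \in Phi, b \in Phi, P a, ~~ P b & dotv a b != 0].

Definition nncomb (S : seq V) (v : V) : Prop :=
  exists c : ('I_(size S) -> nat), v = \sum_(i < size S) (c i)%:R *: S`_i.

Definition simple_system (Phi S : seq V) : Prop :=
  [/\ uniq S,
      {subset S <= Phi},
      (forall c : ('I_(size S) -> R),
          \sum_(i < size S) c i *: S`_i = 0 -> forall i, c i = 0) &
      (forall a, a \in Phi -> nncomb S a \/ nncomb S (- a))].

Definition pos_roots (Phi S : seq V) (v : V) : Prop := v \in Phi /\ nncomb S v.

Definition root_le (S : seq V) (a b : V) : Prop := nncomb S (b - a).

Definition is_ideal (Phi S : seq V) (I : V -> Prop) : Prop :=
  (forall v, I v -> pos_roots Phi S v) /\
  (forall a b, pos_roots Phi S a -> I b -> root_le S a b -> I a).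

(* a chain of K ideals is I : nat -> V -> Prop, only indices 1..K matter;
   Iz extends it with I_0 = empty. *)
Definition Iz (I : nat -> V -> Prop) (i : nat) (v : V) : Prop :=
  if i is 0 then False else I i v.

(* J_0 = Phi^+, J_i = Phi^+ \ I_i for 1 <= i <= K, J_i = J_K for i > K *)
Definition Jz (Phi S : seq V) (K : nat) (I : nat -> V -> Prop) (i : nat) (v : V)
  : Prop :=
  if i is 0 then pos_roots Phi S v
  else pos_roots Phi S v /\ ~ I (minn i K) v.

Definition chain_of_ideals (Phi S : seq V) (K : nat) (I : nat -> V -> Prop) :=
  (forall i, (1 <= i <= K)%N -> is_ideal Phi S (I i)) /\
  (forall i v, (1 <= i)%N -> (i < K)%N -> I i v -> I i.+1 v).

Definition geometric_chain (Phi S : seq V) (K : nat) (I : nat -> V -> Prop) :=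
  [/\ chain_of_ideals Phi S K I,
      (forall i j a b, (i + j <= K)%N -> Iz I i a -> Iz I j b ->
          pos_roots Phi S (a + b) -> Iz I (i + j) (a + b)) &
      (forall i j a b, (i <= K)%N -> (j <= K)%N -> Jz Phi S K I i a ->
          Jz Phi S K I j b -> pos_roots Phi S (a + b) ->
          Jz Phi S K I (i + j) (a + b))].

Definition rdecomp (K : nat) (I : nat -> V -> Prop) (a : V) (t : nat) : Prop :=
  exists s : seq (V * nat),
    [/\ s != [::],
        (forall p, p \in s -> (1 <= p.2 <= K)%N /\ I p.2 p.1),
        a = \sum_(p <- s) p.1 &
        t = (\sum_(p <- s) p.2)%N].

(* rval K I a o  means  r_a(I) = o, where None stands for infinity *)
Definition rval (K : nat) (I : nat -> V -> Prop) (a : V) (o : option nat)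
  : Prop :=
  match o with
  | Some t => rdecomp K I a t /\ (forall t', rdecomp K I a t' -> (t <= t')%N)
  | None => forall t, ~ rdecomp K I a t
  end.

Definition indecomposable (Phi S : seq V) (K : nat) (I : nat -> V -> Prop)
  (r : nat) (a : V) : Prop :=
  [/\ (1 <= r <= K)%N,
      I r a,
      rval K I a (Some r),
      (forall i j, (i + j)%N = r ->
          ~ exists b c, [/\ Iz I i b, Iz I j c & a = b + c]) &
      (forall b t, pos_roots Phi S b -> pos_roots Phi S (a + b) ->
          rval K I (a + b) (Some t) -> (t <= K)%N -> Iz I (t - r) b)].

Definition underline_chain (Phi S : seq V) (k : nat) (I : nat -> V -> Prop)
  (i : nat) (v : V) : Prop :=
  if (i <= k)%N then I i v
  else if i == k.+1 then
    (exists i1 j1 b c, [/\ [/\ (i1 + j1)%N = k.+1, (i1 <= k)%N & (j1 <= k)%N],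
        Iz I i1 b, Iz I j1 c, v = b + c & pos_roots Phi S v])
    \/ I k v \/ v \in S
  else False.

End RootSystems.

(* Main.v *)
Require Import Defs.
From mathcomp Require Import all_boot all_order all_algebra.
From mathcomp Require Import zify ring lra.
From Stdlib Require Import Classical.
Set Implicit Arguments. Unset Strict Implicit. Unset Printing Implicit Defensive.
Import Order.TTheory GRing.Theory Num.Theory.
Local Open Scope ring_scope.

Section Roots.
Variables (R : realFieldType) (n : nat).
Local Notation V := 'rV[R]_n.

Lemma dotvE (u v : V) : dotv u v = \sum_j u 0 j * v 0 j.
Proof. by rewrite /dotv mxE; apply: eq_bigr => j _; rewrite mxE. Qed.

Lemma dotvC (u v : V) : dotv u v = dotv v u.
Proof. by rewrite !dotvE; apply: eq_bigr => j _; rewrite mulrC. Qed.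

Lemma dotvDl (u w v : V) : dotv (u + w) v = dotv u v + dotv w v.
Proof. by rewrite !dotvE -big_split; apply: eq_bigr => j _; rewrite mxE mulrDl. Qed.

Lemma dotvZl c (u v : V) : dotv (c *: u) v = c * dotv u v.
Proof. by rewrite !dotvE mulr_sumr; apply: eq_bigr => j _; rewrite mxE mulrA. Qed.

Lemma dotvNl (u v : V) : dotv (- u) v = - dotv u v.
Proof. by rewrite -scaleN1r dotvZl mulN1r. Qed.

Lemma dotvBl (u w v : V) : dotv (u - w) v = dotv u v - dotv w v.
Proof. by rewrite dotvDl dotvNl. Qed.

Lemma dotvDr (u w v : V) : dotv v (u + w) = dotv v u + dotv v w.
Proof. by rewrite dotvC dotvDl -!(dotvC v). Qed.
Lemma dotvZr c (u v : V) : dotv v (c *: u) = c * dotv v u.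
Proof. by rewrite dotvC dotvZl dotvC. Qed.
Lemma dotvBr (u w v : V) : dotv v (u - w) = dotv v u - dotv v w.
Proof. by rewrite dotvC dotvBl -!(dotvC v). Qed.

Lemma dotv_ge0 (u : V) : 0 <= dotv u u.
Proof. by rewrite dotvE; apply: sumr_ge0 => j _; rewrite -expr2 sqr_ge0. Qed.

Lemma dotv_eq0 (u : V) : dotv u u = 0 -> u = 0.
Proof.
rewrite dotvE => H; apply/matrixP => i j; rewrite ord1 mxE.
have P0 : forall j, xpredT j -> 0 <= u 0 j * u 0 j by move=> k _; rewrite -expr2 sqr_ge0.
have := psumr_eq0P P0 H.
move=> /(_ j isT) /eqP; rewrite mulf_eq0 orbb => /eqP //.
Qed.

Lemma dotv_gt0 (u : V) : u != 0 -> 0 < dotv u u.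
Proof.
move=> nz; rewrite lt_neqAle dotv_ge0 andbT; apply/eqP => H.
by move: nz; rewrite (dotv_eq0 (esym H)) eqxx.
Qed.

Lemma dotv_sum (s : seq (V * nat)) (v : V) :
  dotv (\sum_(p <- s) p.1) v = \sum_(p <- s) dotv p.1 v.
Proof.
elim: s => [|p s IH]; first by rewrite !big_nil dotvE big1 // => j _; rewrite mxE mul0r.
by rewrite !big_cons dotvDl IH.
Qed.

Variable Phi : seq V.
Hypothesis rs : root_system Phi.

Lemma root_nz a : a \in Phi -> a != 0.
Proof. case: rs => /andP [_ H] _ _ _ _ Ha; apply/eqP => E; by rewrite -E Ha in H. Qed.

Lemma root_opp a : a \in Phi -> - a \in Phi.
Proof.
move=> Ha; case: rs => _ _ Hr _ _; have := Hr a a Ha Ha.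
have nz := dotv_gt0 (root_nz Ha).
rewrite /reflect_root /cartan -mulrA mulfV ?gt_eqF // mulr1 scaler_nat.
by rewrite mulr2n opprD addrA subrr sub0r.
Qed.

Lemma root_diff a b : a \in Phi -> b \in Phi -> 0 < dotv a b -> a != b ->
  a - b \in Phi.
Proof.
move=> Ha Hb pos neq; case: rs => _ _ Hr Hz Hc.
have na := dotv_gt0 (root_nz Ha); have nb := dotv_gt0 (root_nz Hb).
(* strict Cauchy-Schwarz *)
set w := dotv b b *: a - dotv a b *: b.
have ww : dotv w w = dotv b b * (dotv b b * dotv a a - dotv a b ^+ 2).
  rewrite /w !dotvBl !dotvBr !dotvZl !dotvZr (dotvC b a); ring.
have wnz : w != 0.
  apply/eqP => /eqP; rewrite subr_eq0 => /eqP E.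
  have E2 : a = (dotv a b / dotv b b) *: b.
    by rewrite mulrC -scalerA -E scalerA mulVf ?gt_eqF // scale1r.
  have : (dotv a b / dotv b b) *: b \in Phi by rewrite -E2.
  move/(Hc _ _ Hb) => [c1|c1]; move: E2; rewrite c1.
  - by rewrite scale1r => E3; rewrite E3 eqxx in neq.
  - rewrite scaleN1r => E3; move: pos; rewrite E3 dotvNl oppr_gt0 => H.
    by move: (lt_trans H nb); rewrite ltxx.
have cs : dotv a b ^+ 2 < dotv b b * dotv a a.
  have := dotv_gt0 wnz; rewrite ww pmulr_rgt0 // subr_gt0 //.
have [z1 Hz1] := Hz b a Hb Ha.
have [z2 Hz2] := Hz a b Ha Hb.
have p1 : 0 < z1.
  by rewrite -(ltr0z R) -Hz1 /cartan divr_gt0 // mulr_gt0.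
have p2 : 0 < z2.
  by rewrite -(ltr0z R) -Hz2 /cartan divr_gt0 // mulr_gt0 // dotvC.
have prod : z1 * z2 < 4.
  rewrite -(ltr_int R) intrM -Hz1 -Hz2 /cartan (dotvC b a).
  have -> : 2 * dotv a b / dotv b b * (2 * dotv a b / dotv a a)
     = 4 * dotv a b ^+ 2 / (dotv b b * dotv a a).
    by field; rewrite !gt_eqF.
  rewrite ltr_pdivrMr ?mulr_gt0 //.
  have -> : (4%:~R : R) = 4 by [].
  by rewrite ltr_pM2l.
have [e1|e2] : z1 = 1 \/ z2 = 1 by lia.
- by have := Hr b a Hb Ha; rewrite /reflect_root Hz1 e1 scale1r.
- have := Hr a b Ha Hb; rewrite /reflect_root Hz2 e2 scale1r => H.
  by have := root_opp H; rewrite opprB.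
Qed.


Variable S : seq V.
Hypothesis ss : simple_system Phi S.

Lemma nncomb0 : nncomb S 0.
Proof. by exists (fun _ => 0%N); rewrite big1 // => i _; rewrite scale0r. Qed.

Lemma nncombD a b : nncomb S a -> nncomb S b -> nncomb S (a + b).
Proof.
move=> [c ->] [d ->]; exists (fun i => (c i + d i)%N).
by rewrite -big_split; apply: eq_bigr => i _; rewrite natrD scalerDl.
Qed.

Lemma nncomb_sum (s : seq (V * nat)) :
  (forall p, p \in s -> nncomb S p.1) -> nncomb S (\sum_(p <- s) p.1).
Proof.
elim: s => [|p s IH] H; first by rewrite big_nil; exact: nncomb0.
rewrite big_cons; apply: nncombD; first by apply: H; rewrite inE eqxx.
by apply: IH => q Hq; apply: H; rewrite inE Hq orbT.
Qed.

Lemma nncomb_uniq (c d : 'I_(size S) -> nat) :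
  \sum_i (c i)%:R *: S`_i = \sum_i (d i)%:R *: S`_i -> forall i, c i = d i.
Proof.
move=> /eqP; rewrite -subr_eq0 -sumrB => /eqP H i.
case: ss => _ _ Hli _.
have HH : \sum_(i < size S) (fun i => ((c i)%:R - (d i)%:R : R)) i *: S`_i = 0.
  by rewrite -[RHS]H; apply: eq_bigr => k _; rewrite scalerBl.
by have := Hli _ HH i; move=> /eqP; rewrite subr_eq0 eqr_nat => /eqP.
Qed.

Lemma nncomb_add0 a b : nncomb S a -> nncomb S b -> a + b = 0 -> a = 0.
Proof.
move=> [c Ec] [d Ed] E.
have : \sum_i ((fun i => (c i + d i)%N) i)%:R *: S`_i = \sum_i ((fun _ : 'I_(size S) => 0%N) i)%:R *: S`_i.
  rewrite [RHS]big1; last by move=> i _; rewrite scale0r.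
  rewrite -[RHS]E Ec Ed -big_split.
  by apply: eq_bigr => i _; rewrite natrD scalerDl.
move=> H; have H2 := nncomb_uniq H.
rewrite Ec big1 // => i _; have := H2 i; move=> /= Hi.
have -> : c i = 0%N by lia.
by rewrite scale0r.
Qed.

Lemma nncomb_addS a b : nncomb S a -> nncomb S b -> a + b \in S -> a = 0 \/ b = 0.
Proof.
move=> [c Ec] [d Ed] HS.
have jlt : (index (a + b)%R S < size S)%N by rewrite index_mem.
pose j := Ordinal jlt.
have Ej : a + b = S`_j by rewrite /= nth_index.
have : \sum_i ((fun i => (c i + d i)%N) i)%:R *: S`_i
     = \sum_i ((fun i : 'I_(size S) => nat_of_bool (i == j)) i)%:R *: S`_i.
  rewrite [RHS](bigD1 j) //= eqxx scale1r [X in _ + X]big1 ?addr0; last first.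
    by move=> i /negPf ->; rewrite scale0r.
  rewrite -Ej Ec Ed -big_split; apply: eq_bigr => i _ /=.
  by rewrite natrD scalerDl.
move=> H; have H2 := nncomb_uniq H.
have Hj := H2 j; rewrite /= eqxx in Hj.
case Ecj: (c j) Hj => [|cj] Hj.
- left; rewrite Ec big1 // => i _; have := H2 i => /= Hi.
  have -> : c i = 0%N; last by rewrite scale0r.
  by move: Hi; case: (i =P j) => [->|_] Hi; lia.
- right; rewrite Ed big1 // => i _; have := H2 i => /= Hi.
  have -> : d i = 0%N; last by rewrite scale0r.
  by move: Hi; case: (i =P j) => [->|_] Hi; lia.
Qed.

Lemma sum_rem (s : seq (V * nat)) p : p \in s ->
  \sum_(q <- s) q.1 = p.1 + \sum_(q <- rem p s) q.1.
Proof. by move=> Hp; rewrite (big_rem p Hp). Qed.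

Lemma sumn_rem (s : seq (V * nat)) p : p \in s ->
  (\sum_(q <- s) q.2 = p.2 + \sum_(q <- rem p s) q.2)%N.
Proof. by move=> Hp; rewrite (big_rem p Hp). Qed.

Lemma peel (s : seq (V * nat)) x : (1 < size s)%N ->
  (forall p, p \in s -> pos_roots Phi S p.1) -> x = \sum_(p <- s) p.1 ->
  pos_roots Phi S x -> exists2 p, p \in s & pos_roots Phi S (x - p.1).
Proof.
move=> sz Hs Ex [Hx _].
have : has (fun p => 0 < dotv p.1 x) s.
  apply/negPn/negP => /hasPn H.
  have := dotv_gt0 (root_nz Hx); rewrite {2}Ex dotvC dotv_sum big_seq.
  have : \sum_(i <- s | i \in s) dotv i.1 x <= 0.
    by apply: sumr_le0 => i Hi; rewrite leNgt; apply: H.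
  by move=> H1 H2; move: (lt_le_trans H2 H1); rewrite ltxx.
move=> /hasP [p Hp pos]; exists p => //.
have Hrest : x - p.1 = \sum_(q <- rem p s) q.1.
  by rewrite Ex (sum_rem Hp) addrC addKr.
split; last first.
  rewrite Hrest; apply: nncomb_sum => q Hq.
  by case: (Hs q (mem_rem Hq)).
have [E|ne] := eqVneq x p.1; last first.
  by apply: root_diff => //; [case: (Hs p Hp) | rewrite dotvC].
exfalso; move: Hrest; rewrite E subrr.
have : (0 < size (rem p s))%N by rewrite size_rem //; case: (size s) sz.
case: (rem p s) (@mem_rem _ p s) => [//|q r] Hmem _.
rewrite big_cons => H0.
have Hq : q \in s by apply: Hmem; rewrite inE eqxx.
have := nncomb_add0 (a := q.1) (b := \sum_(j <- r) j.1) _ _ (esym H0).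
case: (Hs q Hq) => Hq1 Hq2 /(_ Hq2) Hz.
suff : nncomb S (\sum_(j <- r) j.1) by move=> /Hz E0; move: (root_nz Hq1); rewrite E0 eqxx.
by apply: nncomb_sum => j Hj; case: (Hs j (Hmem j _)) => //; rewrite inE Hj orbT.
Qed.

Lemma le_sumn (s : seq (V * nat)) p : p \in s -> (p.2 <= \sum_(q <- s) q.2)%N.
Proof. by move=> Hp; rewrite (sumn_rem Hp) leq_addr. Qed.

Variables (k : nat) (I : nat -> V -> Prop).
Hypothesis G : geometric_chain Phi S k I.

Lemma I_pos i v : (1 <= i <= k)%N -> I i v -> pos_roots Phi S v.
Proof. case: G => [[Hid _] _ _] Hi; by case: (Hid i Hi) => H _; apply: H. Qed.

Lemma I_mono i j v : (1 <= i)%N -> (i <= j)%N -> (j <= k)%N -> I i v -> I j v.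
Proof.
move=> i1 ij jk; case: G => [[_ Hm] _ _].
elim: j ij jk => [|j IH]; first by rewrite leqn0 => /eqP E; move: i1; rewrite E.
rewrite leq_eqVlt => /orP [/eqP -> //|Hij] jk Hv.
rewrite ltnS in Hij.
apply: Hm => //; first exact: leq_trans i1 Hij.
by apply: IH => //; apply: ltnW.
Qed.

Lemma Iz_I i v : (0 < i)%N -> Iz I i v -> I i v.
Proof. by case: i. Qed.
Lemma I_Iz i v : (0 < i)%N -> I i v -> Iz I i v.
Proof. by case: i. Qed.

Lemma sum_in (s : seq (V * nat)) : s != [::] ->
  (forall p, p \in s -> (1 <= p.2 <= k)%N /\ I p.2 p.1) ->
  pos_roots Phi S (\sum_(p <- s) p.1) -> (\sum_(p <- s) p.2 <= k)%N ->
  I (\sum_(p <- s) p.2) (\sum_(p <- s) p.1).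
Proof.
move: {2}(size s) (leqnn (size s)) => m; elim: m s => [|m IH] s.
  by rewrite leqn0 => /nilP ->.
move=> sz ne Hs Hx Hk.
case: s sz ne Hs Hx Hk => [//|p [|q r]] sz _ Hs Hx Hk.
  by rewrite !big_seq1; case: (Hs p (mem_head _ _)).
set s := p :: q :: r in sz Hs Hx Hk *.
have [p0 Hp0 Hrest] := peel (s := s) (x := \sum_(j <- s) j.1) isT
  (fun j Hj => let: conj H1 H2 := Hs j Hj in I_pos H1 H2) erefl Hx.
have Hp0' := Hs p0 Hp0.
have neR : rem p0 s != [::].
  apply/eqP => E; have := size_rem Hp0; rewrite E /=; done.
have szR : (size (rem p0 s) <= m)%N by rewrite size_rem //; move: sz; rewrite /s /=.
have HR : forall j, j \in rem p0 s -> (1 <= j.2 <= k)%N /\ I j.2 j.1.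
  by move=> j Hj; apply: Hs; apply: mem_rem Hj.
rewrite (sum_rem Hp0) (sumn_rem Hp0) in Hrest Hk *.
rewrite addrC addKr in Hrest.
have IHr := IH _ szR neR HR Hrest (leq_trans (leq_addl _ _) Hk).
have pos1 : (0 < \sum_(j <- rem p0 s) j.2)%N.
  case: (rem p0 s) neR HR => [//|j r'] _ HR'; rewrite big_cons.
  by case: (HR' j (mem_head _ _)) => /andP [H1 _] _; apply: leq_trans H1 (leq_addr _ _).
case: G => _ Gi _.
rewrite addnC addrC; apply: Iz_I; first by rewrite addn_gt0 pos1.
apply: Gi; first by rewrite addnC.
- by apply: I_Iz.
- by case: Hp0' => /andP [H1 _] H; apply: I_Iz.
- by rewrite addrC -(sum_rem Hp0).
Qed.


Lemma rval_exists K (J : nat -> V -> Prop) x t : rdecomp K J x t ->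
  exists t0, rval K J x (Some t0).
Proof.
move: t; suff H : forall m t, (t <= m)%N -> rdecomp K J x t -> exists t0, rval K J x (Some t0).
  by move=> t; apply: (H t).
elim=> [|m IH] t tm Ht.
  exists t; split => // t' _; by move: tm; rewrite leqn0 => /eqP ->.
have [[t' [lt' Ht']]|nex] := classic (exists t', (t' < t)%N /\ rdecomp K J x t').
  by apply: (IH t') => //; rewrite -ltnS; apply: leq_trans lt' tm.
exists t; split => // t' Ht'; rewrite leqNgt; apply/negP => lt'.
by apply: nex; exists t'.
Qed.

Variables (r : nat) (alpha : V).
Hypothesis Hind : indecomposable Phi S k I r alpha.

Lemma rdecomp1 x i : (1 <= i <= k)%N -> I i x -> rdecomp k I x i.
Proof.
move=> Hi Hx; exists [:: (x, i)]; split => //.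
- by move=> p; rewrite inE => /eqP ->.
- by rewrite big_seq1.
- by rewrite big_seq1.
Qed.

Section Case.
Variables (g d b : V) (i j : nat).
Hypotheses (ij : (i + j)%N = k.+1) (Hi : (1 <= i <= k)%N) (Hj : (1 <= j <= k)%N)
  (Ig : I i g) (Id : I j d) (pb : pos_roots Phi S b).

Lemma caseA : alpha = g -> b = d -> I (k.+1 - r) b.
Proof.
move=> Ea Eb; case: Hind => Hr _ [_ Hmin] _ _.
have ri : (r <= i)%N by apply: Hmin; rewrite Ea; apply: rdecomp1.
rewrite Eb; apply: (I_mono (i := j)) => //; try lia.
Qed.

Lemma caseB eta : pos_roots Phi S eta -> g = alpha + eta -> b = d + eta ->
  I (k.+1 - r) b.
Proof.
move=> peta Eg Eb; case: Hind => Hr _ _ _ Hiii.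
have Ig' := Ig; rewrite Eg in Ig'.
have [t0 [Ht0 Hmin]] := rval_exists (rdecomp1 Hi Ig').
have t0i : (t0 <= i)%N by apply: Hmin; apply: rdecomp1.
have := Hiii eta t0 peta (I_pos Hi Ig').
move=> /(_ (conj Ht0 Hmin)) /(_ (leq_trans t0i (proj2 (andP Hi)))) Heta.
have t0r : (0 < t0 - r)%N by move: Heta; case: (t0 - r)%N.
case: G => _ Gi _.
have jpos : (0 < j)%N by case/andP: Hj.
have H2 : Iz I (t0 - r + j) (eta + d).
  apply: Gi => //; [lia | exact: I_Iz | by rewrite addrC -Eb].
apply: (I_mono (i := (t0 - r + j)%N)); try lia.
  by apply: Iz_I; [lia| rewrite addrC -Eb in H2].
Qed.

Lemma JzE m v : (0 < m)%N -> Jz Phi S k I m v <-> pos_roots Phi S v /\ ~ I (minn m k) v.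
Proof. by case: m. Qed.

Lemma caseC eta : pos_roots Phi S eta -> alpha = g + eta -> d = b + eta ->
  I (k.+1 - r) b.
Proof.
move=> peta Ea Ed; case: Hind => Hr _ _ Hii _.
have Ib : I j b.
  case: G => [[Hid _] _ _]; case: (Hid j Hj) => _ Hdc.
  apply: (Hdc b d) => //; rewrite /root_le Ed addrC addKr; by case: peta.
have [jle|jgt] := leqP j (k.+1 - r).
  by apply: (I_mono (i := j)) => //; lia.
apply: NNPP => nb.
have neta : ~ I (r - i) eta.
  move=> Ie; apply: (Hii i (r - i)%N); first by lia.
  exists g, eta; split => //; apply: I_Iz => //; lia.
case: G => _ _ Gj.
have J1 : Jz Phi S k I (r - i) eta.
  have hm : (0 < r - i)%N by lia.
  apply/(JzE _ hm); split => //; rewrite (minn_idPl _) //; lia.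
have J2 : Jz Phi S k I (k.+1 - r) b.
  have hm : (0 < k.+1 - r)%N by lia.
  apply/(JzE _ hm); split => //; rewrite (minn_idPl _) //; lia.
have := Gj (r - i)%N (k.+1 - r)%N eta b ltac:(lia) ltac:(lia) J1 J2.
rewrite addrC -Ed => /(_ (I_pos Hj Id)) /JzE [].
  by lia.
have -> : minn (r - i + (k.+1 - r)) k = j by lia.
by move=> _; apply.
Qed.
End Case.

Lemma pair_cases u v : pos_roots Phi S u -> pos_roots Phi S v -> 0 < dotv u v ->
  [\/ u = v, pos_roots Phi S (u - v) | pos_roots Phi S (v - u)].
Proof.
move=> [Hu _] [Hv _] p; have [->|ne] := eqVneq u v; first by constructor 1.
have Hd := root_diff Hu Hv p ne.
case: ss => _ _ _ Hdi; case: (Hdi _ Hd) => Hn.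
  by constructor 2.
by constructor 3; split; [rewrite -opprB; apply: root_opp | rewrite -opprB].
Qed.

Lemma eqh (x y z w : V) : x + y = z + w -> w = y + (x - z).
Proof. by move=> E; rewrite addrA (addrC y) E addrAC subrr add0r. Qed.
Lemma eqs (x z : V) : x = z + (x - z).
Proof. by rewrite addrC subrK. Qed.

Lemma core g d b i j : (i + j)%N = k.+1 -> (1 <= i <= k)%N -> (1 <= j <= k)%N ->
  I i g -> I j d -> pos_roots Phi S b -> pos_roots Phi S (alpha + b) ->
  alpha + b = g + d -> I (k.+1 - r) b.
Proof.
move=> ij Hi Hj Ig Id pb pab E.
have ji : (j + i)%N = k.+1 by rewrite addnC.
have E' : alpha + b = d + g by rewrite E addrC.
have E2 : b + alpha = g + d by rewrite addrC.
have E3 : b + alpha = d + g by rewrite addrC E addrC.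
have pa : pos_roots Phi S alpha by case: Hind => Hr Ir _ _ _; apply: (I_pos Hr Ir).
have pg := I_pos Hi Ig; have pd := I_pos Hj Id.
have : 0 < dotv (g + d) (alpha + b).
  by rewrite -E; apply: dotv_gt0; apply: root_nz; case: pab.
rewrite dotvDl !dotvDr => H0.
case: (boolP (0 < dotv g alpha)) => h1.
  rewrite dotvC in h1; case: (pair_cases pa pg h1) => [Eq|pe|pe].
  - by apply: (caseA ij Hi Hj Ig Id) => //; apply: (@addrI _ g); rewrite -{1}Eq E.
  - by apply: (caseC ij Hi Hj Ig Id pb pe); [apply: eqs | apply: eqh E].
  - by apply: (caseB ij Hi Hj Ig Id pb pe); [apply: eqs | apply: eqh (esym E)].
case: (boolP (0 < dotv d alpha)) => h2.
  rewrite dotvC in h2; case: (pair_cases pa pd h2) => [Eq|pe|pe].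
  - by apply: (caseA ji Hj Hi Id Ig) => //; apply: (@addrI _ d); rewrite -{1}Eq E'.
  - by apply: (caseC ji Hj Hi Id Ig pb pe); [apply: eqs | apply: eqh E'].
  - by apply: (caseB ji Hj Hi Id Ig pb pe); [apply: eqs | apply: eqh (esym E')].
case: (boolP (0 < dotv g b)) => h3.
  rewrite dotvC in h3; case: (pair_cases pb pg h3) => [Eq|pe|pe].
  - by apply: (caseA ji Hj Hi Id Ig) => //; apply: (@addrI _ g); rewrite -{1}Eq E3 addrC.
  - by apply: (caseB ji Hj Hi Id Ig pb pe); [apply: eqh E2 | apply: eqs].
  - by apply: (caseC ji Hj Hi Id Ig pb pe); [apply: eqh (esym E2) | apply: eqs].
case: (boolP (0 < dotv d b)) => h4.
  rewrite dotvC in h4; case: (pair_cases pb pd h4) => [Eq|pe|pe].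
  - by apply: (caseA ij Hi Hj Ig Id) => //; apply: (@addrI _ d); rewrite -{1}Eq E2 addrC.
  - by apply: (caseB ij Hi Hj Ig Id pb pe); [apply: eqh E3 | apply: eqs].
  - by apply: (caseC ij Hi Hj Ig Id pb pe); [apply: eqh (esym E3) | apply: eqs].
move: h1 h2 h3 h4; rewrite -!leNgt => h1 h2 h3 h4.
have := lerD (lerD h1 h3) (lerD h2 h4); rewrite !addr0 => H.
by move: (lt_le_trans H0 H); rewrite ltxx.
Qed.

Local Notation U := (underline_chain Phi S k I).

Lemma U_le i v : (i <= k)%N -> U i v <-> I i v.
Proof. by move=> Hi; rewrite /underline_chain Hi. Qed.

Lemma Iz_U i v : (i <= k)%N -> Iz U i v <-> Iz I i v.
Proof. by case: i => // i Hi; apply: U_le. Qed.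

Lemma rd_up x t : rdecomp k I x t -> rdecomp k.+1 U x t.
Proof.
move=> [s [ne Hs Ex Et]]; exists s; split => // p Hp.
case: (Hs p Hp) => /andP [H1 H2] H3; split; first by rewrite H1 /= ltnW.
by apply/U_le.
Qed.

Lemma rd_down x t : rdecomp k.+1 U x t -> (t <= k)%N -> rdecomp k I x t.
Proof.
move=> [s [ne Hs Ex Et]] tk; exists s; split => // p Hp.
have pk : (p.2 <= k)%N by apply: leq_trans tk; rewrite Et; apply: le_sumn.
case: (Hs p Hp) => /andP [H1 H2] H3; split; first by rewrite H1 pk.
by apply/U_le.
Qed.

Lemma rv_down x t : rval k.+1 U x (Some t) -> (t <= k)%N -> rval k I x (Some t).
Proof.
move=> [Ht Hmin] tk; split; first by apply: rd_down.
by move=> t' Ht'; apply: Hmin; apply: rd_up.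
Qed.

Lemma two_terms b : pos_roots Phi S alpha -> pos_roots Phi S b ->
  pos_roots Phi S (alpha + b) ->
  rval k.+1 U (alpha + b) (Some k.+1) ->
  exists g d i j, [/\ (i + j)%N = k.+1, (1 <= i <= k)%N, (1 <= j <= k)%N,
      I i g & I j d] /\ alpha + b = g + d.
Proof.
move=> pa pb pab [[s [ne Hs Ex Et]] Hmin].
case: (boolP (has (fun p => k < p.2)%N s)).
  move=> /hasP [p Hp lt]; case: (Hs p Hp) => /andP [_ H2] Up.
  have pk : p.2 = k.+1 by apply/eqP; rewrite eqn_leq H2 lt.
  have Er : rem p s = [::].
    move: Et; rewrite (sumn_rem Hp) pk.
    case: (rem p s) (@mem_rem _ p s) => [//|q rr] Hmem; rewrite big_cons => Et.
    case: (Hs q (Hmem q (mem_head _ _))) => /andP [H _] _; lia.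
  have Exp : alpha + b = p.1 by rewrite Ex (sum_rem Hp) Er big_nil addr0.
  move: Up; rewrite pk /underline_chain ltnn eqxx -Exp.
  move=> [[i1 [j1 [g [d [[Hij i1k j1k] Ig Id E _]]]]]|[Ik|InS]].
  - have i1p : (0 < i1)%N by move: Ig; case: (i1).
    have j1p : (0 < j1)%N by move: Id; case: (j1).
    exists g, d, i1, j1; split => //; split => //; try (apply/andP; split => //).
    + exact: Iz_I.
    + exact: Iz_I.
  - exfalso; have : (k.+1 <= k)%N; last by rewrite ltnn.
    apply: Hmin; apply: rd_up; apply: rdecomp1 => //.
    by case: Hind => /andP [r1 rk] _ _ _ _; rewrite leqnn andbT (leq_trans r1 rk).
  - exfalso; case: pa => pa1 pa2; case: pb => pb1 pb2.
    case: (nncomb_addS pa2 pb2 InS) => E0.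
    + by move: (root_nz pa1); rewrite E0 eqxx.
    + by move: (root_nz pb1); rewrite E0 eqxx.
move=> /hasPn Hall.
have HsI : forall p, p \in s -> (1 <= p.2 <= k)%N /\ I p.2 p.1.
  move=> p Hp; have := Hall p Hp; rewrite -leqNgt => pk.
  case: (Hs p Hp) => /andP [H1 _] H3; split; first by rewrite H1 pk.
  by apply/U_le.
have sz : (1 < size s)%N.
  case: s ne Hs Ex Et Hmin Hall HsI => [//|p [|q rr]] // _ _ _ Et _ _ HsI.
  move: Et; rewrite big_seq1; case: (HsI p (mem_head _ _)) => /andP [_ H] _ E. by move: H; rewrite -E ltnn.
have [p Hp Hrest] := peel sz (fun q Hq => let: conj H1 H2 := HsI q Hq in I_pos H1 H2) Ex pab.
have Hrest' : alpha + b - p.1 = \sum_(q <- rem p s) q.1.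
  by rewrite Ex (sum_rem Hp) addrC addKr.
have neR : rem p s != [::].
  by apply/eqP => E; have := size_rem Hp; rewrite E; case: (size s) sz => [|[]].
have Etr := Et; rewrite (sumn_rem Hp) in Etr.
have pos1 : (0 < \sum_(j <- rem p s) j.2)%N.
  have HR : forall j, j \in rem p s -> (1 <= j.2 <= k)%N /\ I j.2 j.1.
    by move=> j Hj; apply: HsI; apply: mem_rem Hj.
  case: (rem p s) neR HR => [//|j r'] _ HR'; rewrite big_cons.
  by case: (HR' j (mem_head _ _)) => /andP [H1 _] _; apply: leq_trans H1 (leq_addr _ _).
case: (HsI p Hp) => /andP [p1 pk] Ip.
have Sk : (\sum_(q <- rem p s) q.2 <= k)%N.
  by rewrite -ltnS Etr -{1}(add0n (\sum_(q <- rem p s) q.2)) ltn_add2r.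
have Ig : I (\sum_(j <- rem p s) j.2) (alpha + b - p.1).
  rewrite Hrest'; apply: sum_in => //.
  - by move=> j Hj; apply: HsI; apply: mem_rem Hj.
  - by rewrite -Hrest'.
exists (alpha + b - p.1), p.1, (\sum_(j <- rem p s) j.2), p.2; split; [split|].
- by rewrite addnC -Etr.
- by rewrite pos1 Sk.
- by rewrite p1 pk.
- exact: Ig.
- exact: Ip.
- by rewrite subrK.
Qed.

Lemma main_ind : indecomposable Phi S k.+1 U r alpha.
Proof.
case: (Hind) => Hr Ir [Hdec Hmin] Hii Hiii.
have rk : (r <= k)%N by case/andP: Hr.
have pa : pos_roots Phi S alpha by apply: (I_pos Hr Ir).
split.
- by case/andP: Hr => -> /= H; apply: leq_trans H _.
- by apply/U_le.
- split; first by apply: rd_up.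
  move=> t' Ht'; have [tk|tk] := leqP t' k.
    by apply: Hmin; apply: rd_down.
  by apply: leq_trans rk (ltnW tk).
- move=> i j Hij [b [c [Hb Hc E]]]; apply: (Hii i j Hij); exists b, c; split => //.
  + have ir : (i <= k)%N by apply: leq_trans rk; rewrite -Hij leq_addr.
    exact: (proj1 (Iz_U _ ir) Hb).
  + have jr : (j <= k)%N by apply: leq_trans rk; rewrite -Hij leq_addl.
    exact: (proj1 (Iz_U _ jr) Hc).
- move=> b t pb pab rv tk.
  apply/Iz_U; first by lia.
  have [tk'|tk'] := leqP t k.
    by apply: (Hiii b t pb pab) => //; apply: rv_down.
  have Et : t = k.+1 by lia.
  rewrite Et in rv *.
  have [g [d [i [j [[ij Hi Hj Ig Id] E]]]]] := two_terms pa pb pab rv.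
  apply: I_Iz; first by lia.
  exact: (core ij Hi Hj Ig Id pb pab E).
Qed.

End Roots.

Theorem lemma13 (R : realFieldType) (n : nat) (Phi S : seq 'rV[R]_n)
  (k : nat) (I : nat -> 'rV[R]_n -> Prop) (r : nat) (alpha : 'rV[R]_n) :
  root_system Phi -> irreducible_rs Phi -> simple_system Phi S ->
  (0 < k)%N ->
  geometric_chain Phi S k I ->
  indecomposable Phi S k I r alpha ->
  indecomposable Phi S k.+1 (underline_chain Phi S k I) r alpha.
Proof.
move=> rs _ ss _ G H.
exact: (main_ind rs ss G H).
Qed.
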